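(* Let $f:\mathbb{R}^n\to\mathbb{R}$ be a continuously differentiable convex function and $s$ a positive integer. Let $h(x)=\sum_{i=1}^n h_i(x_i)$ be separable, with each $h_i:\mathbb{R}\to\mathbb{R}$ continuously differentiable and strictly convex, and suppose $f$ is $L_h$-smooth relative to $h$ (i.e. $L_h h-f$ is convex) for some $L_h>0$. If $x\in C_s$ is a CW-minimum point of $f$, then $$x\in\operatorname*{argmin}_{y\in C_s}\ \nabla f(x)^T(y-x)+L_h D_h(y,x),$$ i.e. $x$ is $L_h$-Bregman stationary with respect to $h$.
   Context: $C_s=\{x\in\mathbb{R}^n:\|x\|_0\le s\}$ where $\|x\|_0$ is the number of nonzero entries. $D_h(y,x)=h(y)-h(x)-\nabla h(x)^T(y-x)$. $I_1(x)=\{i:x_i\ne0\}$; $e_j$ is the $j$-th standard basis vector. A point $x\in C_s$ is a CW-minimum point of $f$ if either $\|x\|_0<s$ and $f(x)\le f(x+te_i)$ for all $t\in\mathbb{R}$ and all $i=1,\dots,n$; or $\|x\|_0=s$ and $f(x)\le f(x-x_ie_i+te_j)$ for all $t\in\mathbb{R}$, all $i\in I_1(x)$ and all $j=1,\dots,n$. *)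

(* Defs.v *)
From HB Require Import structures.
From mathcomp Require Import all_boot all_order all_algebra.
From mathcomp Require Import all_classical all_reals all_analysis.
Set Implicit Arguments. Unset Strict Implicit. Unset Printing Implicit Defensive.
Import Order.TTheory GRing.Theory Num.Theory.
Import numFieldNormedType.Exports.
Local Open Scope ring_scope.

Section Defs.
Variables (R : realType) (n : nat).

Definition l0norm (x : 'rV[R]_n) : nat := #|[set i : 'I_n | x 0 i != 0]|.

Definition Cs (s : nat) : set 'rV[R]_n := [set x | (l0norm x <= s)%N].

Definition I1 (x : 'rV[R]_n) : {set 'I_n} := [set i | x 0 i != 0].

Definition evec (j : 'I_n) : 'rV[R]_n := delta_mx 0 j.

Definition convex_fun (f : 'rV[R]_n -> R) : Prop :=
  forall (x y : 'rV[R]_n) (t : R), 0 <= t <= 1 ->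
    f (t *: x + (1 - t) *: y) <= t * f x + (1 - t) * f y.

(* continuously differentiable: differentiable everywhere and every
   directional derivative x |-> 'd f x v is continuous (equivalent, in finite
   dimension, to continuity of x |-> 'd f x) *)
Definition C1 (f : 'rV[R]_n -> R) : Prop :=
  (forall x, differentiable f x) /\ (forall v, continuous (fun x => 'd f x v)).

Definition sep_h (hs : 'I_n -> R -> R) (x : 'rV[R]_n) : R :=
  \sum_(i < n) hs i (x 0 i).

Definition bregman (h : 'rV[R]_n -> R) (y x : 'rV[R]_n) : R :=
  h y - h x - 'd h x (y - x).

Definition CW_minimum (s : nat) (f : 'rV[R]_n -> R) (x : 'rV[R]_n) : Prop :=
  Cs s x /\
  (((l0norm x < s)%N /\ forall (t : R) (i : 'I_n), f x <= f (x + t *: evec i))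
   \/
   ((l0norm x = s) /\ forall (t : R) (i j : 'I_n), i \in I1 x ->
       f x <= f (x - x 0 i *: evec i + t *: evec j))).

End Defs.

Definition strictly_convex1 (R : realType) (g : R -> R) : Prop :=
  forall (a b t : R), a != b -> 0 < t < 1 ->
    g (t * a + (1 - t) * b) < t * g a + (1 - t) * g b.

Definition C1_real (R : realType) (g : R -> R) : Prop :=
  (forall a : R, derivable g a 1) /\ continuous (derive1 g).

(* Main.v *)
Require Import Defs.
From HB Require Import structures.
From mathcomp Require Import all_boot all_order all_algebra.
From mathcomp Require Import all_classical all_reals all_analysis.
From mathcomp Require Import ring lra zify.
Import Order.TTheory GRing.Theory Num.Theory.
Import numFieldNormedType.Exports.
Local Open Scope ring_scope.

Lemma grad_ineq (R : realType) (n : nat) (g : 'rV[R]_n -> R) (x z : 'rV[R]_n) :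
  convex_fun g -> differentiable g x -> g x + 'd g x (z - x) <= g z.
Proof.
move=> cg dg.
set v := z - x.
have dv : derivable g x v by apply: diff_derivable.
rewrite -deriveE //.
rewrite -lerBrDl.
rewrite leNgt; apply/negP => Hlt.
have H1 : \forall t \near ((0:R)^')%classic, g z - g x < t^-1 *: ((g \o shift x) (t *: v) - g x).
  exact: (@cvgr_gt _ _ _ _ _ _ dv _ Hlt).
have H2 : \forall t \near ((0:R)^'+)%classic, g z - g x < t^-1 *: ((g \o shift x) (t *: v) - g x).
  move: H1; rewrite !near_withinE; apply: filterS => t Ht t0.
  by apply: Ht; rewrite gt_eqF.
have H3 : \forall t \near ((0:R)^'+)%classic, (g z - g x < t^-1 *: ((g \o shift x) (t *: v) - g x))
   /\ (0 < t) /\ t < 1.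
  near=> t; split; [near: t; exact: H2| split; near: t].
    exact: nbhs_right_gt.
  exact: nbhs_right_lt.
have [t [Ht [t0 t1]]] := filter_ex H3.
move: Ht; apply/negP; rewrite -leNgt /=.
have e : t *: v + x = t *: z + (1 - t) *: x.
  by rewrite /v scalerBr scalerBl scale1r -addrA (addrC (- _)).
rewrite e.
have := cg z x t; rewrite ltW // ltW //= => /(_ isT) Hc.
rewrite [_ *: _]/(_ * _) /=.
rewrite ler_pdivrMl //.
lra.
Unshelve. all: by end_near.
Qed.

Arguments grad_ineq {R n g} x z.

Lemma sep_h_diff (R : realType) (n : nat) (hs : 'I_n -> R -> R) x :
  (forall i, C1_real (hs i)) -> differentiable (sep_h hs) x.
Proof.
move=> hC.
have -> : sep_h hs = \sum_(i < n) (fun y : 'rV[R]_n => hs i (y 0 i)).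
  by rewrite fct_sumE; apply: funext => y.
apply: differentiable_sum => i.
apply: (differentiable_comp (f := fun y : 'rV[R]_n => y 0 i) (g := hs i)).
  exact: differentiable_coord.
by apply/derivable1_diffP; case: (hC i).
Qed.

Arguments sep_h_diff {R n hs} x.

Lemma lin_dec (R : realType) (n : nat) (l : {linear 'rV[R]_n -> R}) w :
  l w = \sum_(i < n) w 0 i * l (evec R i).
Proof.
rewrite {1}(row_sum_delta w) linear_sum; apply: eq_bigr => i _.
by rewrite linearZ.
Qed.

Arguments lin_dec {R n}.

Definition phi (R : realType) (n : nat) (f : 'rV[R]_n -> R) (hs : 'I_n -> R -> R)
  (L : R) (x : 'rV[R]_n) (i : 'I_n) (t : R) :=
  (t - x 0 i) * ('d f x (evec R i) - L * 'd (sep_h hs) x (evec R i))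
  + L * (hs i t - hs i (x 0 i)).

Arguments phi {R n}.

Lemma Phi_dec (R : realType) (n : nat) (f : 'rV[R]_n -> R) (hs : 'I_n -> R -> R)
  (L : R) (x z : 'rV[R]_n) :
  'd f x (z - x) + L * bregman (sep_h hs) z x = \sum_(i < n) phi f hs L x i (z 0 i).
Proof.
rewrite /bregman /sep_h (lin_dec ('d f x)) (lin_dec ('d (sep_h hs) x)).
rewrite -!sumrB mulr_sumr -big_split /=; apply: eq_bigr => i _.
rewrite /phi !mxE; ring.
Qed.
Lemma sum1 (R : realFieldType) (I : finType) (F : I -> R) i :
  (forall k, k != i -> F k = 0) -> \sum_k F k = F i.
Proof.
move=> H; rewrite (bigD1 i) //= big1 ?addr0 // => k; exact: H.
Qed.

Lemma sum2 (R : realFieldType) (I : finType) (F : I -> R) i j : i != j ->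
  (forall k, k != i -> k != j -> F k = 0) -> \sum_k F k = F i + F j.
Proof.
move=> ij H; rewrite (bigD1 i) //= (bigD1 j) /=; last by rewrite eq_sym ij.
rewrite big1 ?addr0 // => k /andP[ki kj]; exact: H.
Qed.

Lemma comb (R : realFieldType) (I : finType) (k : nat) : forall (a : I -> R) (A B : {set I}),
  #|A| = k -> (#|A| <= #|B|)%N -> (forall j, j \in A -> j \notin B) ->
  (forall j, j \notin A -> 0 <= a j) -> (forall i j, i \in B -> j \in A -> 0 <= a i + a j) ->
  0 <= \sum_j a j.
Proof.
elim: k => [|k IH] a A B cA AB dis pos pair.
  apply: sumr_ge0 => j _; apply: pos.
  by move/eqP: cA; rewrite cards_eq0 => /eqP ->; rewrite finset.in_set0.
have /finset.set0Pn [j jA] : A != finset.set0 by rewrite -cards_eq0 cA.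
have /finset.set0Pn [i iB] : B != finset.set0 by rewrite -cards_eq0 -lt0n (leq_trans _ AB) // cA.
have ij : i != j by apply/eqP => e; move: (dis j jA); rewrite -e iB.
pose a' := fun k => if (k == i) || (k == j) then 0 else a k.
have -> : \sum_k a k = \sum_k (a' k + ((k == i)%:R * a i + (k == j)%:R * a j)).
  apply: eq_bigr => l _; rewrite /a'.
  case: (eqVneq l i) => [->|li]; first by rewrite (negPf ij) /=; ring.
  case: (eqVneq l j) => [->|lj] /=; first by ring.
  ring.
rewrite big_split big_split /= (@sum1 _ _ (fun k => (k == i)%:R * a i) i); last first.
  by move=> l /negPf li /=; rewrite li mul0r.
rewrite (@sum1 _ _ (fun k => (k == j)%:R * a j) j); last by move=> l /negPf li /=; rewrite li mul0r.
rewrite !eqxx !mul1r.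
apply: addr_ge0; last exact: pair iB jA.
apply: (IH a' (A :\ j) (B :\ i)).
- by move: cA; rewrite (cardsD1 j) jA add1n => -[].
- by move: AB; rewrite (cardsD1 j A) (cardsD1 i B) jA iB !add1n ltnS.
- move=> l; rewrite !in_setD1 => /andP[lj lA]; apply/negP => /andP[_ lB].
  by move: (dis l lA); rewrite lB.
- move=> l; rewrite /a' in_setD1 negb_and negbK.
  case: (eqVneq l i) => // li; case: (eqVneq l j) => //= lj lA.
  exact: pos.
- move=> i' j'; rewrite !in_setD1 /a' => /andP[i'i i'B] /andP[j'j j'A].
  have i'j : i' != j by apply/eqP => e; move: (dis j jA); rewrite -e i'B.
  have j'i : j' != i by apply/eqP => e; move: (dis j' j'A); rewrite e iB.
  rewrite (negPf i'i) (negPf i'j) (negPf j'i) (negPf j'j) /=.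
  exact: pair.
Qed.

Theorem theorem4p12 (R : realType) (n s : nat) (f : 'rV[R]_n -> R)
  (hs : 'I_n -> R -> R) (L : R) (x : 'rV[R]_n) :
  C1 f -> convex_fun f -> (0 < s)%N ->
  (forall i, C1_real (hs i)) -> (forall i, strictly_convex1 (hs i)) ->
  0 < L -> convex_fun (fun y => L * sep_h hs y - f y) ->
  CW_minimum s f x ->
  forall y : 'rV[R]_n, Cs s y ->
    'd f x (x - x) + L * bregman (sep_h hs) x x
    <= 'd f x (y - x) + L * bregman (sep_h hs) y x.
Proof.
move=> [fd _] _ _ hC _ L0 cg [Csx cw] y Csy.
have hd : differentiable (sep_h hs) x := sep_h_diff x hC.
have eg : (fun y => L * sep_h hs y - f y) = (L *: sep_h hs - f) by [].
have gd : differentiable (L *: sep_h hs - f) x.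
  by apply: differentiableB; [apply: differentiableZ|].
have KI : forall z, f x <= f z -> 0 <= \sum_(i < n) phi f hs L x i (z 0 i).
  move=> z fxz; rewrite -Phi_dec.
  have := grad_ineq x z cg; rewrite eg => /(_ gd).
  rewrite diffB ?diffZ //=; last exact: differentiableZ.
  rewrite /bregman.
  set D := 'd (sep_h hs) x (z - x).
  have -> : L *: D = L * D by [].
  move=> G; nra.
have phix : forall k, phi f hs L x k (x 0 k) = 0.
  by move=> k; rewrite /phi !subrr mul0r mulr0 addr0.
rewrite !Phi_dec big1 //.
have entry : forall (z : 'rV[R]_n) (t : R) (i k : 'I_n),
    (z + t *: evec R i) 0 k = z 0 k + t * (k == i)%:R.
  by move=> z t i k; rewrite !mxE eqxx.
have entry2 : forall (c t : R) (i j k : 'I_n),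
    (x - c *: evec R i + t *: evec R j) 0 k = x 0 k - c * (k == i)%:R + t * (k == j)%:R.
  by move=> c t i j k; rewrite !mxE eqxx.
case: cw => [[lt cw1] | [eq cw2]].
  apply: sumr_ge0 => i _.
  have := KI _ (cw1 (y 0 i - x 0 i) i).
  rewrite (@sum1 _ _ _ i); last first.
    by move=> k /negPf ki; rewrite entry ki mulr0 addr0 phix.
  by rewrite entry eqxx mulr1 addrC subrK.
have posS : forall i u, x 0 i != 0 -> 0 <= phi f hs L x i u.
  move=> i u xi.
  have Ii : i \in I1 x by rewrite /I1 inE.
  have := KI _ (cw2 u i i Ii).
  rewrite (@sum1 _ _ _ i); last first.
    by move=> k /negPf ki; rewrite entry2 ki !mulr0 subr0 addr0 phix.
  by rewrite entry2 eqxx !mulr1 subrr add0r.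
have pairS : forall i j u, x 0 i != 0 -> x 0 j = 0 ->
    0 <= phi f hs L x i 0 + phi f hs L x j u.
  move=> i j u xi xj.
  have ij : i != j by apply/eqP => e; move: xi; rewrite e xj eqxx.
  have Ii : i \in I1 x by rewrite /I1 inE.
  have := KI _ (cw2 u i j Ii).
  rewrite (@sum2 _ _ _ i j ij); last first.
    by move=> k /negPf ki /negPf kj; rewrite entry2 ki kj !mulr0 subr0 addr0 phix.
  rewrite !entry2 !eqxx (negPf ij) eq_sym (negPf ij) !mulr1 !mulr0 addr0 subrr.
  by rewrite xj subr0 add0r.
pose X := [set k : 'I_n | x 0 k != 0].
pose Y := [set k : 'I_n | y 0 k != 0].
apply: (@comb _ _ _ (fun k => phi f hs L x k (y 0 k)) (Y :\: X) (X :\: Y) erefl).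
- have cX : #|X| = s by rewrite -eq.
  have cY : (#|Y| <= s)%N by exact: Csy.
  have := cardsID X Y; have := cardsID Y X; rewrite finset.setIC; lia.
- move=> j; rewrite !inE => /andP[/negPn xj _]; apply/negP => /andP[_].
  by rewrite xj.
- move=> j; rewrite !inE negb_and negbK => /orP[xj|/negPn /eqP yj].
    exact: posS.
  have [xj|xj] := eqVneq (x 0 j) 0; last exact: posS.
  by rewrite yj; have := phix j; rewrite xj => ->.
- move=> i j; rewrite !inE => /andP[/negPn /eqP yi xi] /andP[/negPn /eqP xj _].
  by rewrite yi; apply: pairS.
Qed.
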